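(* Let $X$ be a real Hilbert space and let $T_1,T_2,T_3\colon X\to X$ be $\sigma_1$-, $\sigma_2$-, and $\sigma_3$-cocoercive, respectively. Let $\eta,\nu,\lambda,\delta>0$, set $S:=-\nu\mathrm{Id}+\lambda T_1-\delta T_3T_1$ and $$T:=\mathrm{Id}-\eta T_1+\eta T_2 S.$$ (i) If $\lambda=2\nu\sigma_1=2\sigma_2$ and $\eta^*:=\frac{1}{\nu}\big(\lambda-\frac{\delta}{2\sigma_3}\big)>0$, then for all $x,y\in X$, $$\|Tx-Ty\|^2\le\|x-y\|^2-\Big(\frac{\eta^*}{\eta}-1\Big)\|(\mathrm{Id}-T)x-(\mathrm{Id}-T)y\|^2-\frac{\delta}{2\eta\nu\sigma_3}\|(\mathrm{Id}-T)x-(\mathrm{Id}-T)y-2\eta\sigma_3(T_3T_1x-T_3T_1y)\|^2.$$ (ii) If $\lambda<\nu\sigma_1+\sigma_2$ and $$\eta^*:=\frac{1}{\nu}\Big(\frac{(2\nu\sigma_1-\lambda)(2\sigma_2-\lambda)}{2(\nu\sigma_1+\sigma_2-\lambda)}+\lambda-\frac{\delta}{2\sigma_3}\Big)>0,$$ then for all $x,y\in X$, $$\|Tx-Ty\|^2\le\|x-y\|^2-\Big(\frac{\eta^*}{\eta}-1\Big)\|(\mathrm{Id}-T)x-(\mathrm{Id}-T)y\|^2-\frac{\delta}{2\eta\nu\sigma_3}\|(\mathrm{Id}-T)x-(\mathrm{Id}-T)y-2\eta\sigma_3(T_3T_1x-T_3T_1y)\|^2$$ $$\qquad-\frac{\eta}{2\nu(\nu\sigma_1+\sigma_2-\lambda)}\|(2\nu\sigma_1-\lambda)(T_1x-T_1y)+(2\sigma_2-\lambda)(T_2Sx-T_2Sy)\|^2.$$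 In both cases, $T$ is conically $\frac{\eta}{\eta^*}$-averaged.
   Context: An operator $T\colon X\to X$ is $\sigma$-cocoercive ($\sigma>0$) if $\langle x-y,Tx-Ty\rangle\ge\sigma\|Tx-Ty\|^2$ for all $x,y$. An operator $T\colon X\to X$ is conically $\theta$-averaged ($\theta>0$) if $T=(1-\theta)\mathrm{Id}+\theta N$ for some nonexpansive (1-Lipschitz) $N\colon X\to X$. *)

(* Defs.v *)
From HB Require Import structures.
From mathcomp Require Import all_boot all_order all_algebra.
From mathcomp Require Import all_classical all_reals all_analysis.
Set Implicit Arguments. Unset Strict Implicit. Unset Printing Implicit Defensive.
Import Order.TTheory GRing.Theory Num.Theory.
Import numFieldNormedType.Exports.
Local Open Scope ring_scope.

(* A real Hilbert space: a complete real normed space V whose norm is induced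
   by an inner product [ip] (symmetric, linear in the first argument,
   and |x|^2 = <x,x>; positive definiteness follows from the norm axioms). *)
Definition hilbert_inner (R : realType) (V : completeNormedModType R)
  (ip : V -> V -> R) : Prop :=
  [/\ (forall x y, ip x y = ip y x),
      (forall a x y z, ip (a *: x + y) z = a * ip x z + ip y z) &
      (forall x, `|x| ^+ 2 = ip x x)].

Definition cocoercive (R : realType) (V : completeNormedModType R)
  (ip : V -> V -> R) (sigma : R) (T : V -> V) : Prop :=
  0 < sigma /\
  forall x y, sigma * `|T x - T y| ^+ 2 <= ip (x - y) (T x - T y).

Definition nonexpansive (R : realType) (V : completeNormedModType R)
  (N : V -> V) : Prop := forall x y, `|N x - N y| <= `|x - y|.

Definition conically_averaged (R : realType) (V : completeNormedModType R)
  (theta : R) (T : V -> V) : Prop :=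
  0 < theta /\
  exists N : V -> V, nonexpansive N /\
    forall x, T x = (1 - theta) *: x + theta *: N x.

(* Main.v *)
Require Import Defs.
From HB Require Import structures.
From mathcomp Require Import all_boot all_order all_algebra.
From mathcomp Require Import all_classical all_reals all_analysis.
From mathcomp Require Import ring lra.
Import Order.TTheory GRing.Theory Num.Theory.
Import numFieldNormedType.Exports.
Local Open Scope ring_scope.
Set Implicit Arguments. Unset Strict Implicit.

Lemma ip0l (R : realType) (V : completeNormedModType R) (ip : V -> V -> R) :
  hilbert_inner ip -> forall z, ip 0 z = 0.
Proof.
case=> _ hl _ z; have := hl 1 0 0 z; rewrite scale1r addr0 mul1r; lra.
Qed.

Lemma ipDl (R : realType) (V : completeNormedModType R) (ip : V -> V -> R) :
  hilbert_inner ip -> forall x y z, ip (x + y) z = ip x z + ip y z.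
Proof. by case=> _ hl _ x y z; rewrite -[x in LHS]scale1r hl mul1r. Qed.

Lemma ipZl (R : realType) (V : completeNormedModType R) (ip : V -> V -> R) :
  hilbert_inner ip -> forall a x z, ip (a *: x) z = a * ip x z.
Proof.
move=> h a x z; have := h; case=> _ hl _.
by rewrite -[a *: x]addr0 hl ip0l // addr0.
Qed.

Lemma ipNl (R : realType) (V : completeNormedModType R) (ip : V -> V -> R) :
  hilbert_inner ip -> forall x z, ip (- x) z = - ip x z.
Proof. by move=> h x z; rewrite -scaleN1r ipZl // mulN1r. Qed.

Lemma ipC (R : realType) (V : completeNormedModType R) (ip : V -> V -> R) :
  hilbert_inner ip -> forall x y, ip x y = ip y x.
Proof. by case. Qed.

Lemma ipDr (R : realType) (V : completeNormedModType R) (ip : V -> V -> R) :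
  hilbert_inner ip -> forall x y z, ip z (x + y) = ip z x + ip z y.
Proof. by move=> h x y z; rewrite !(ipC h z) ipDl. Qed.

Lemma ipZr (R : realType) (V : completeNormedModType R) (ip : V -> V -> R) :
  hilbert_inner ip -> forall a x z, ip z (a *: x) = a * ip z x.
Proof. by move=> h a x z; rewrite !(ipC h z) ipZl. Qed.

Lemma ipNr (R : realType) (V : completeNormedModType R) (ip : V -> V -> R) :
  hilbert_inner ip -> forall x z, ip z (- x) = - ip z x.
Proof. by move=> h x z; rewrite !(ipC h z) ipNl. Qed.

Lemma nsq (R : realType) (V : completeNormedModType R) (ip : V -> V -> R) :
  hilbert_inner ip -> forall x, `|x| ^+ 2 = ip x x.
Proof. by case. Qed.

Lemma conic_of_ineq (R : realType) (V : completeNormedModType R)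
  (ip : V -> V -> R) (T : V -> V) (eta etas : R) :
  hilbert_inner ip -> 0 < eta -> 0 < etas ->
  (forall x y, `|T x - T y| ^+ 2 <=
      `|x - y| ^+ 2 - (etas / eta - 1) * `|(x - T x) - (y - T y)| ^+ 2) ->
  conically_averaged (eta / etas) T.
Proof.
move=> h he hes H; split; first by rewrite divr_gt0.
set k := etas / eta.
have hk : 0 < k by rewrite divr_gt0.
have hth : (eta / etas)^-1 = k by rewrite invf_div.
exists (fun x => x - k *: (x - T x)); split; last first.
  move=> x; rewrite scalerBr scalerA -hth mulfV ?gt_eqF //; last by rewrite divr_gt0.
  rewrite scale1r scalerBl scale1r.
  by rewrite opprB addrA subrK subrKC.
move=> x y.
rewrite -(ler_pXn2r (n:=2)) // ?nnegrE //.
have := H x y.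
rewrite !(nsq h) !(ipDl h, ipDr h, ipNl h, ipNr h, ipZl h, ipZr h).
rewrite ?(ipC h y x) ?(ipC h (T x) x) ?(ipC h (T y) x) ?(ipC h (T x) y) ?(ipC h (T y) y) ?(ipC h (T y) (T x)).
move=> H1.
nra.
Qed.

Ltac pos := repeat (first [ assumption | exact: sqr_ge0 | apply: addr_ge0 | apply: mulr_ge0 | apply: divr_ge0 | apply: mulr_gt0 | apply: divr_gt0 | rewrite invr_gt0 | assumption | done | apply: ltW ]).

Lemma and_imp_ext (A B : Prop) : A -> (A -> B) -> A /\ B.
Proof. by move=> a f; split; [|apply: f]. Qed.

Theorem proposition3p2 (R : realType) (V : completeNormedModType R)
  (ip : V -> V -> R) (T1 T2 T3 : V -> V) (s1 s2 s3 eta nu lam del : R) :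
  hilbert_inner ip ->
  cocoercive ip s1 T1 -> cocoercive ip s2 T2 -> cocoercive ip s3 T3 ->
  0 < eta -> 0 < nu -> 0 < lam -> 0 < del ->
  let S := fun x => - (nu *: x) + lam *: T1 x - del *: T3 (T1 x) in
  let T := fun x => x - eta *: T1 x + eta *: T2 (S x) in
  let IT := fun x => x - T x in
  (* (i) *)
  (lam = 2 * nu * s1 -> lam = 2 * s2 ->
   let etas := nu^-1 * (lam - del / (2 * s3)) in
   0 < etas ->
   (forall x y,
     `|T x - T y| ^+ 2 <=
       `|x - y| ^+ 2
       - (etas / eta - 1) * `|IT x - IT y| ^+ 2
       - del / (2 * eta * nu * s3) *
           `|IT x - IT y - (2 * eta * s3) *: (T3 (T1 x) - T3 (T1 y))| ^+ 2)
   /\ conically_averaged (eta / etas) T) /\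
  (* (ii) *)
  (lam < nu * s1 + s2 ->
   let etas := nu^-1 * ((2 * nu * s1 - lam) * (2 * s2 - lam)
                          / (2 * (nu * s1 + s2 - lam))
                        + lam - del / (2 * s3)) in
   0 < etas ->
   (forall x y,
     `|T x - T y| ^+ 2 <=
       `|x - y| ^+ 2
       - (etas / eta - 1) * `|IT x - IT y| ^+ 2
       - del / (2 * eta * nu * s3) *
           `|IT x - IT y - (2 * eta * s3) *: (T3 (T1 x) - T3 (T1 y))| ^+ 2
       - eta / (2 * nu * (nu * s1 + s2 - lam)) *
           `|(2 * nu * s1 - lam) *: (T1 x - T1 y)
             + (2 * s2 - lam) *: (T2 (S x) - T2 (S y))| ^+ 2)
   /\ conically_averaged (eta / etas) T).

Proof.
move=> h c1 c2 c3 he hn hl hd S T IT.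
case: c1 => hs1 C1; case: c2 => hs2 C2; case: c3 => hs3 C3.
split.
- move=> el e2 etas hes.
  apply: and_imp_ext => [|main].
    move=> x y.
    rewrite /IT /T.
    set v1 := T2 (S x); set v2 := T2 (S y); set w1 := T3 (T1 x); set w2 := T3 (T1 y).
    have F1 := C1 x y; have F2 := C2 (S x) (S y); have F3 := C3 (T1 x) (T1 y).
    rewrite -/v1 -/v2 -/w1 -/w2 in F3 F2.
    rewrite /S -/w1 -/w2 in F2.
    clearbody v1 v2 w1 w2.
    move: F1 F2 F3; rewrite !(nsq h) !(ipDl h, ipDr h, ipNl h, ipNr h, ipZl h, ipZr h).
    rewrite ?(ipC h y x) ?(ipC h (T1 x) x) ?(ipC h (T1 y) x) ?(ipC h v1 x) ?(ipC h v2 x) ?(ipC h w1 x) ?(ipC h w2 x) ?(ipC h (T1 x) y) ?(ipC h (T1 y) y) ?(ipC h v1 y) ?(ipC h v2 y) ?(ipC h w1 y) ?(ipC h w2 y) ?(ipC h (T1 y) (T1 x)) ?(ipC h v1 (T1 x)) ?(ipC h v2 (T1 x)) ?(ipC h w1 (T1 x)) ?(ipC h w2 (T1 x)) ?(ipC h v1 (T1 y)) ?(ipC h v2 (T1 y)) ?(ipC h w1 (T1 y)) ?(ipC h w2 (T1 y)) ?(ipC h v2 v1) ?(ipC h w1 v1) ?(ipC h w2 v1) ?(ipC h w1 v2) ?(ipC h w2 v2) ?(ipC h w2 w1).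
    move=> F1 F2 F3; rewrite -subr_ge0 in F1; rewrite -subr_ge0 in F2; rewrite -subr_ge0 in F3.

    rewrite /etas; subst lam.
    have es2 : s2 = nu * s1 by lra.
    subst s2.
    rewrite -subr_ge0.
    match type of F1 with is_true (0 <= ?a) => match type of F2 with is_true (0 <= ?b) =>
    match type of F3 with is_true (0 <= ?c) => match goal with |- is_true (0 <= ?E) =>
      have -> : E = 2*eta*a + 2*eta/nu*b + 2*eta*del/nu*c end end end end.
      by field; rewrite !gt_eqF.
    pos.
  refine (conic_of_ineq h he hes _) => x y; apply: le_trans (main x y) _.
  rewrite lerBlDr lerDl; pos.
- move=> hlt etas hes.
  have hp : 0 < nu * s1 + s2 - lam by lra.
  apply: and_imp_ext => [|main].
    move=> x y.
    rewrite /IT /T.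
    set v1 := T2 (S x); set v2 := T2 (S y); set w1 := T3 (T1 x); set w2 := T3 (T1 y).
    have F1 := C1 x y; have F2 := C2 (S x) (S y); have F3 := C3 (T1 x) (T1 y).
    rewrite -/v1 -/v2 -/w1 -/w2 in F3 F2.
    rewrite /S -/w1 -/w2 in F2.
    clearbody v1 v2 w1 w2.
    move: F1 F2 F3; rewrite !(nsq h) !(ipDl h, ipDr h, ipNl h, ipNr h, ipZl h, ipZr h).
    rewrite ?(ipC h y x) ?(ipC h (T1 x) x) ?(ipC h (T1 y) x) ?(ipC h v1 x) ?(ipC h v2 x) ?(ipC h w1 x) ?(ipC h w2 x) ?(ipC h (T1 x) y) ?(ipC h (T1 y) y) ?(ipC h v1 y) ?(ipC h v2 y) ?(ipC h w1 y) ?(ipC h w2 y) ?(ipC h (T1 y) (T1 x)) ?(ipC h v1 (T1 x)) ?(ipC h v2 (T1 x)) ?(ipC h w1 (T1 x)) ?(ipC h w2 (T1 x)) ?(ipC h v1 (T1 y)) ?(ipC h v2 (T1 y)) ?(ipC h w1 (T1 y)) ?(ipC h w2 (T1 y)) ?(ipC h v2 v1) ?(ipC h w1 v1) ?(ipC h w2 v1) ?(ipC h w1 v2) ?(ipC h w2 v2) ?(ipC h w2 w1).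
    move=> F1 F2 F3; rewrite -subr_ge0 in F1; rewrite -subr_ge0 in F2; rewrite -subr_ge0 in F3.

    rewrite /etas.
    rewrite -subr_ge0.
    match type of F1 with is_true (0 <= ?a) => match type of F2 with is_true (0 <= ?b) =>
    match type of F3 with is_true (0 <= ?c) => match goal with |- is_true (0 <= ?E) =>
      have -> : E = 2*eta*a + 2*eta/nu*b + 2*eta*del/nu*c end end end end.
      by field; rewrite !gt_eqF.
    pos.
  apply: (conic_of_ineq h) => // x y; apply: le_trans (main x y) _.
  rewrite -[leLHS]addrA -opprD lerBlDr lerDl; pos.
Qed.
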